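(* Fix a constant $c\ge1$. There is a constant $C>0$ depending only on $c$ such that for all integers $n\ge3$, $U\ge3$ with $n/c\le U\le cn$, all $\epsilon\in(0,1/2]$, and all $t\ge C\,n\log(1/\epsilon)$, $$v(t):=\max_{i}\big\|(K^t)_i-\pi\big\|_1\le\epsilon,$$ where $(K^t)_i$ denotes the row of $K^t$ indexed by state $i$, the maximum is over all $2n$ states, and $\pi$ is the stationary distribution of the original chain.
   Context: Let $n\ge3$ and $U\ge3$ be integers. The ''original chain'' is the Markov chain on the $2n$ states $\{1,\dots,n,1',\dots,n'\}$ with the following transition probabilities (all unlisted transitions have probability $0$): for $2\le i\le n-1$: $i\to i$ w.p. $1/2$, $i\to i+1$ w.p. $\frac12(1-\frac1U)$, $i\to(i+1)'$ w.p. $\frac1{2U}$; for $2\le i\le n-1$: $i'\to i'$ w.p. $1/2$, $i'\to(i-1)'$ w.p. $\frac12(1-\frac1U)$, $i'\to i-1$ w.p. $\frac1{2U}$; $1\to2$ w.p. $1-\frac1U$, $1\to2'$ w.p. $\frac1U$; $1'\to1$ w.p. $1-\frac1U$, $1'\to1'$ w.p. $\frac1U$; $n\to n'$ w.p. $1-\frac1U$, $n\to n$ w.p. $\frac1U$; $n'\to(n-1)'$ w.p. $1-\frac1U$, $n'\to n-1$ w.p. $\frac1U$. $K$ is its $2n\times 2n$ row-stochastic transition matrix ($K_{xy}$ = probability of moving from $x$ to $y$), and $\pi$ its unique stationary distribution ($\pi K=\pi$). *)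

(* Defs.v *)
From Stdlib Require Import Reals Lra Lia List Arith.
Import ListNotations.
Open Scope R_scope.

(* A state is a pair (primed, i) with 1 <= i <= n:
   (false, i) is state i and (true, i) is state i'. *)
Definition state := (bool * nat)%type.

Definition state_eqb (x y : state) : bool :=
  Bool.eqb (fst x) (fst y) && Nat.eqb (snd x) (snd y).

Definition states (n : nat) : list state :=
  map (fun i => (false, i)) (seq 1 n) ++ map (fun i => (true, i)) (seq 1 n).

Definition rsum {A : Type} (l : list A) (f : A -> R) : R :=
  fold_right (fun a acc => f a + acc) 0 l.

Definition ind (b : bool) (p : R) : R := if b then p else 0.

Definition Kp (n U : nat) (x y : state) : R :=
  let u := INR U in
  let i := snd x in
  match fst x with
  | false =>
      if Nat.eqb i 1 then
        ind (state_eqb y (false, 2%nat)) (1 - 1/u)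
        + ind (state_eqb y (true, 2%nat)) (1/u)
      else if Nat.eqb i n then
        ind (state_eqb y (true, n)) (1 - 1/u)
        + ind (state_eqb y (false, n)) (1/u)
      else
        ind (state_eqb y (false, i)) (1/2)
        + ind (state_eqb y (false, S i)) ((1/2) * (1 - 1/u))
        + ind (state_eqb y (true, S i)) (1 / (2 * u))
  | true =>
      if Nat.eqb i 1 then
        ind (state_eqb y (false, 1%nat)) (1 - 1/u)
        + ind (state_eqb y (true, 1%nat)) (1/u)
      else if Nat.eqb i n then
        ind (state_eqb y (true, pred n)) (1 - 1/u)
        + ind (state_eqb y (false, pred n)) (1/u)
      else
        ind (state_eqb y (true, i)) (1/2)
        + ind (state_eqb y (true, pred i)) ((1/2) * (1 - 1/u))
        + ind (state_eqb y (false, pred i)) (1 / (2 * u))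
  end.

Fixpoint Kpow (n U t : nat) (x y : state) : R :=
  match t with
  | O => if state_eqb x y then 1 else 0
  | S t' => rsum (states n) (fun z => Kpow n U t' x z * Kp n U z y)
  end.

(* pi is a stationary distribution of K (it is unique, the chain being
   irreducible, so this characterizes "the" stationary distribution). *)
Definition stationary (n U : nat) (pi : state -> R) : Prop :=
  (forall x, In x (states n) -> 0 <= pi x) /\
  rsum (states n) pi = 1 /\
  (forall y, In y (states n) -> rsum (states n) (fun x => pi x * Kp n U x y) = pi y).

Definition vdist (n U : nat) (pi : state -> R) (t : nat) : R :=
  fold_right Rmax 0
    (map (fun i => rsum (states n) (fun y => Rabs (Kpow n U t i y - pi y))) (states n)).

(* Main.v *)
Require Import Defs.
From Stdlib Require Import Reals.
From Stdlib Require Import Reals Lra Lia List Arith.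
Import ListNotations.
Open Scope R_scope.

Lemma rsum_nil {A} (f : A -> R) : rsum [] f = 0.
Proof. reflexivity. Qed.
Lemma rsum_cons {A} (a : A) l f : rsum (a :: l) f = f a + rsum l f.
Proof. reflexivity. Qed.
Lemma rsum_app {A} (l1 l2 : list A) f : rsum (l1 ++ l2) f = rsum l1 f + rsum l2 f.
Proof. induction l1; simpl; [unfold rsum; simpl; lra| unfold rsum in *; simpl; rewrite IHl1; lra]. Qed.
Lemma rsum_ext {A} (l : list A) f g : (forall x, In x l -> f x = g x) -> rsum l f = rsum l g.
Proof. induction l; intros H; [reflexivity|]. rewrite !rsum_cons, H, IHl; auto; [intros; apply H|]; simpl; auto. Qed.
Lemma rsum_plus {A} (l : list A) f g : rsum l (fun x => f x + g x) = rsum l f + rsum l g.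
Proof. induction l; [unfold rsum; simpl; lra|]. rewrite !rsum_cons, IHl; lra. Qed.
Lemma rsum_scal {A} (l : list A) f c : rsum l (fun x => c * f x) = c * rsum l f.
Proof. induction l; [unfold rsum; simpl; lra|]. rewrite !rsum_cons, IHl; lra. Qed.
Lemma rsum_scalr {A} (l : list A) f c : rsum l (fun x => f x * c) = rsum l f * c.
Proof. induction l; [unfold rsum; simpl; lra|]. rewrite !rsum_cons, IHl; lra. Qed.
Lemma rsum_minus {A} (l : list A) f g : rsum l (fun x => f x - g x) = rsum l f - rsum l g.
Proof. induction l; [unfold rsum; simpl; lra|]. rewrite !rsum_cons, IHl; lra. Qed.
Lemma rsum_const0 {A} (l : list A) : rsum l (fun _ => 0) = 0.
Proof. induction l; [reflexivity|]. rewrite rsum_cons, IHl; lra. Qed.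
Lemma rsum_nonneg {A} (l : list A) f : (forall x, In x l -> 0 <= f x) -> 0 <= rsum l f.
Proof. induction l; intros H; [unfold rsum; simpl; lra|]. rewrite rsum_cons.
  assert (0 <= f a) by (apply H; simpl; auto). assert (0 <= rsum l f) by (apply IHl; intros; apply H; simpl; auto). lra. Qed.
Lemma rsum_le {A} (l : list A) f g : (forall x, In x l -> f x <= g x) -> rsum l f <= rsum l g.
Proof. induction l; intros H; [unfold rsum; simpl; lra|]. rewrite !rsum_cons.
  assert (f a <= g a) by (apply H; simpl; auto). assert (rsum l f <= rsum l g) by (apply IHl; intros; apply H; simpl; auto). lra. Qed.
Lemma rsum_exchange {A B} (l : list A) (m : list B) f :
  rsum l (fun a => rsum m (fun b => f a b)) = rsum m (fun b => rsum l (fun a => f a b)).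
Proof. induction l.
  - rewrite rsum_nil. symmetry. apply rsum_const0.
  - rewrite rsum_cons, IHl. rewrite <- rsum_plus. apply rsum_ext. intros. rewrite rsum_cons. reflexivity. Qed.
Lemma rsum_abs {A} (l : list A) f : Rabs (rsum l f) <= rsum l (fun x => Rabs (f x)).
Proof. induction l; [unfold rsum; simpl; rewrite Rabs_R0; lra|]. rewrite !rsum_cons.
  eapply Rle_trans; [apply Rabs_triang|]. lra. Qed.
Lemma rsum_map {A B} (g : A -> B) l f : rsum (map g l) f = rsum l (fun x => f (g x)).
Proof. induction l; [reflexivity|]. cbn [map]. rewrite !rsum_cons, IHl. reflexivity. Qed.

Lemma rsum_remove {A} (dec : forall x y : A, {x = y} + {x <> y}) (l : list A) a f :
  In a l -> exists l', rsum l f = f a + rsum l' f /\ (forall x, In x l -> x <> a -> In x l') /\ (forall x, In x l' -> In x l).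
Proof. induction l; intros H; [inversion H|]. destruct (dec a0 a) as [->|ne].
  - exists l. rewrite rsum_cons. split; [reflexivity|]. split; [intros x [->|Hx] Hne; [congruence|auto]|simpl; auto].
  - destruct H as [->|H]; [congruence|]. destruct (IHl H) as [l' [E [I1 I2]]].
    exists (a0 :: l'). rewrite !rsum_cons, E. split; [lra|]. split.
    + intros x [->|Hx] Hne; simpl; auto.
    + intros x [->|Hx]; simpl; auto. Qed.

Lemma rsum_sub {A} (dec : forall x y : A, {x = y} + {x <> y}) (m l : list A) f :
  NoDup m -> (forall x, In x m -> In x l) -> (forall x, In x l -> 0 <= f x) ->
  rsum m f <= rsum l f.
Proof. revert l. induction m as [|a m IH]; intros l Hnd Hinc Hpos.
  - rewrite rsum_nil. apply rsum_nonneg. auto.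
  - inversion Hnd; subst. destruct (rsum_remove dec l a f (Hinc a (or_introl eq_refl))) as [l' [E [I1 I2]]].
    rewrite rsum_cons, E. assert (rsum m f <= rsum l' f); [|lra].
    apply IH; auto. intros x Hx. apply I1. apply Hinc; simpl; auto. intro; subst; contradiction. Qed.

Fixpoint sN (f : nat -> R) (L : nat) : R := match L with O => 0 | S L' => sN f L' + f L' end.
Lemma sN_ext f g L : (forall j, (j < L)%nat -> f j = g j) -> sN f L = sN g L.
Proof. induction L; intros H; simpl; auto. rewrite IHL, H; auto. Qed.
Lemma sN_plus f g L : sN (fun j => f j + g j) L = sN f L + sN g L.
Proof. induction L; simpl; lra. Qed.
Lemma sN_scal f c L : sN (fun j => c * f j) L = c * sN f L.
Proof. induction L; simpl; lra. Qed.
Lemma sN_le f g L : (forall j, (j < L)%nat -> f j <= g j) -> sN f L <= sN g L.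
Proof. induction L; intros H; simpl; [lra|]. assert (sN f L <= sN g L) by (apply IHL; intros; apply H; lia). assert (f L <= g L) by (apply H; lia). lra. Qed.
Lemma sN_zero L : sN (fun _ => 0) L = 0.
Proof. induction L; simpl; auto. rewrite IHL; lra. Qed.
Lemma sN_nonneg f L : (forall j, (j < L)%nat -> 0 <= f j) -> 0 <= sN f L.
Proof. intros H. rewrite <- (sN_zero L). apply sN_le; auto. Qed.
Lemma sN_shift f L : sN f (S L) = f O + sN (fun j => f (S j)) L.
Proof. induction L; simpl in *; [lra|]. rewrite IHL. lra. Qed.
Lemma sN_rsum f L : sN f L = rsum (seq 0 L) f.
Proof. induction L; [reflexivity|]. rewrite seq_S, rsum_app. cbn [sN]. rewrite IHL, rsum_cons, rsum_nil. simpl. lra. Qed.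
Lemma sN_ind f a L : (a < L)%nat -> sN (fun q => if Nat.eqb q a then f q else 0) L = f a.
Proof. induction L; intros H; [lia|]. simpl. destruct (Nat.eqb_spec L a).
  - rewrite (sN_ext _ (fun _ => 0)). 2:{ intros j Hj. destruct (Nat.eqb_spec j a); [lia|auto]. }
    rewrite sN_zero. subst. lra.
  - rewrite IHL; [lra|lia]. Qed.
Lemma sN_split f K L : sN f (K + L) = sN f K + sN (fun i => f (K + i)%nat) L.
Proof. induction L; simpl; [rewrite Nat.add_0_r; lra|]. rewrite Nat.add_succ_r; simpl. rewrite IHL. lra. Qed.
Lemma sN_zero_tail f m L : (forall j, (m < j)%nat -> f j = 0) -> (S m <= L)%nat -> sN f L = sN f (S m).
Proof. intros H HL. induction HL as [|L HL IH]; auto. change (sN f (S L)) with (sN f L + f L). rewrite IH, (H L); [lra|lia]. Qed.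
Lemma state_eqb_spec x y : state_eqb x y = true <-> x = y.
Proof. destruct x as [b i], y as [b' i']. unfold state_eqb; simpl. rewrite Bool.andb_true_iff, Nat.eqb_eq.
  split; [intros [H1 H2]; apply Bool.eqb_prop in H1; subst; auto|intros H; inversion H; subst; split; auto; apply Bool.eqb_reflx]. Qed.
Lemma state_eqb_false x y : x <> y -> state_eqb x y = false.
Proof. intros H. destruct (state_eqb x y) eqn:E; auto. apply state_eqb_spec in E. contradiction. Qed.
Lemma state_eqb_refl x : state_eqb x x = true.
Proof. apply state_eqb_spec; auto. Qed.
Definition state_dec (x y : state) : {x = y} + {x <> y}.
Proof. destruct (state_eqb x y) eqn:E; [left; apply state_eqb_spec; auto|right; intro H; apply state_eqb_spec in H; congruence]. Defined.

Lemma in_states n b i : In (b, i) (states n) <-> (1 <= i <= n)%nat.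
Proof. unfold states. rewrite in_app_iff, !in_map_iff. split.
  - intros [[k [E Hk]]|[k [E Hk]]]; inversion E; subst; apply in_seq in Hk; lia.
  - intros H. destruct b; [right|left]; exists i; split; auto; apply in_seq; lia. Qed.
Lemma states_nodup n : NoDup (states n).
Proof. unfold states. apply NoDup_app.
  - apply NoDup_map_NoDup_ForallPairs; [intros a b _ _ E; inversion E; auto|apply seq_NoDup].
  - apply NoDup_map_NoDup_ForallPairs; [intros a b _ _ E; inversion E; auto|apply seq_NoDup].
  - intros a Ha Hb. apply in_map_iff in Ha, Hb. destruct Ha as [k [E _]], Hb as [k' [E' _]]. subst. inversion E'. Qed.
Lemma states_length n : length (states n) = (2 * n)%nat.
Proof. unfold states. rewrite length_app, !length_map, length_seq. lia. Qed.

Lemma rsum_const {A} (l : list A) c : rsum l (fun _ => c) = INR (length l) * c.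
Proof. induction l; [unfold rsum; simpl; lra|]. rewrite rsum_cons, IHl. cbn [length]. rewrite S_INR. lra. Qed.

Lemma rsum_ind {A} (l : list A) (eqb : A -> A -> bool) (eqb_spec : forall x y, eqb x y = true <-> x = y) a g :
  NoDup l -> In a l -> rsum l (fun y => if eqb y a then g y else 0) = g a.
Proof. induction l as [|b l IH]; intros Hnd Hin; [inversion Hin|]. inversion Hnd; subst. rewrite rsum_cons.
  destruct Hin as [->|Hin].
  - assert (eqb a a = true) by (apply eqb_spec; auto). rewrite H.
    rewrite (rsum_ext _ _ (fun _ => 0)). rewrite rsum_const0; lra.
    intros y Hy. destruct (eqb y a) eqn:E; auto. apply eqb_spec in E. subst. contradiction.
  - rewrite IH; auto. destruct (eqb b a) eqn:E; [apply eqb_spec in E; subst; contradiction|lra]. Qed.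

Lemma rsum_states_ind n s g : In s (states n) -> rsum (states n) (fun y => if state_eqb y s then g y else 0) = g s.
Proof. intros. apply rsum_ind; auto. apply state_eqb_spec. apply states_nodup. Qed.
Lemma rsum_states_ind' n s g : In s (states n) -> rsum (states n) (fun y => if state_eqb s y then g y else 0) = g s.
Proof. intros H. rewrite <- (rsum_states_ind n s g H). apply rsum_ext. intros y _.
  destruct (state_eqb s y) eqn:E1, (state_eqb y s) eqn:E2; auto;
  [apply state_eqb_spec in E1; subst; rewrite state_eqb_refl in E2|apply state_eqb_spec in E2; subst; rewrite state_eqb_refl in E1]; discriminate. Qed.

Lemma ind_sum n s p : In s (states n) -> rsum (states n) (fun y => Defs.ind (state_eqb y s) p) = p.
Proof. intros H. transitivity (rsum (states n) (fun y => if state_eqb y s then p else 0)). apply rsum_ext. intros y _. unfold Defs.ind. destruct (state_eqb y s); auto. apply (rsum_states_ind n s (fun _ => p) H). Qed.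

Section Chain.
Variables (n U : nat).
Hypothesis Hn : (3 <= n)%nat.
Hypothesis HU : (3 <= U)%nat.

Lemma U_pos : 3 <= INR U.
Proof. replace 3 with (INR 3) by (simpl; lra). apply le_INR; auto. Qed.
Lemma invU_bounds : 0 < 1 / INR U <= 1/3.
Proof. pose proof U_pos. split; [apply Rdiv_lt_0_compat; lra|]. unfold Rdiv. rewrite !Rmult_1_l. apply Rinv_le_contravar; lra. Qed.

Lemma ind_nonneg b p : 0 <= p -> 0 <= Defs.ind b p.
Proof. destruct b; simpl; lra. Qed.

Lemma Kp_nonneg x y : 0 <= Kp n U x y.
Proof. pose proof invU_bounds. assert (0 < 1 / (2 * INR U)) by (apply Rdiv_lt_0_compat; pose proof U_pos; lra).
  unfold Kp. destruct (fst x); destruct (Nat.eqb _ 1); try destruct (Nat.eqb _ n);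
  repeat apply Rplus_le_le_0_compat; apply ind_nonneg; nra. Qed.

Lemma Kp_rowsum x : In x (states n) -> rsum (states n) (fun y => Kp n U x y) = 1.
Proof. destruct x as [b i]. intros Hx. apply in_states in Hx. pose proof U_pos.
  unfold Kp; simpl. destruct b; destruct (Nat.eqb_spec i 1); try destruct (Nat.eqb_spec i n); rewrite ?rsum_plus; rewrite ?ind_sum; try (apply in_states; lia); field; lra. Qed.

Lemma Kpow_nonneg t x y : 0 <= Kpow n U t x y.
Proof. revert y. induction t; intros y; simpl; [destruct (state_eqb x y); lra|].
  apply rsum_nonneg. intros. apply Rmult_le_pos; auto. apply Kp_nonneg. Qed.

Lemma Kpow_rowsum t x : In x (states n) -> rsum (states n) (fun y => Kpow n U t x y) = 1.
Proof. intros Hx. induction t; simpl.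
  - apply (rsum_states_ind' n x (fun _ => 1) Hx).
  - rewrite rsum_exchange. rewrite <- IHt. apply rsum_ext. intros z Hz. rewrite rsum_scal, Kp_rowsum; auto; lra. Qed.

Lemma Kpow_add t s x y : In y (states n) -> Kpow n U (t + s) x y = rsum (states n) (fun z => Kpow n U t x z * Kpow n U s z y).
Proof. revert y. induction s; intros y Hy.
  - rewrite Nat.add_0_r. simpl. symmetry. transitivity (rsum (states n) (fun z => if state_eqb z y then Kpow n U t x z else 0)); [|apply (rsum_states_ind n y (fun z => Kpow n U t x z) Hy)].
    apply rsum_ext. intros z _. destruct (state_eqb z y); lra.
  - rewrite Nat.add_succ_r. simpl.
    rewrite (rsum_ext _ _ (fun w => rsum (states n) (fun z => Kpow n U t x z * Kpow n U s z w * Kp n U w y))).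
    2:{ intros w Hw. rewrite IHs; auto. rewrite <- rsum_scalr. auto. }
    rewrite rsum_exchange. apply rsum_ext. intros z _. rewrite <- rsum_scal. apply rsum_ext. intros; lra. Qed.

Lemma stat_pow pi s y : stationary n U pi -> In y (states n) -> rsum (states n) (fun x => pi x * Kpow n U s x y) = pi y.
Proof. intros [Hp [H1 H2]]. revert y. induction s; intros y Hy; simpl.
  - transitivity (rsum (states n) (fun x => if state_eqb x y then pi x else 0)); [|apply (rsum_states_ind n y pi Hy)].
    apply rsum_ext. intros. destruct (state_eqb x y); lra.
  - rewrite (rsum_ext _ _ (fun x => rsum (states n) (fun z => pi x * Kpow n U s x z * Kp n U z y))).
    2:{ intros. rewrite <- rsum_scal. apply rsum_ext; intros; lra. }
    rewrite rsum_exchange. rewrite <- (H2 y Hy). apply rsum_ext. intros z Hz. rewrite rsum_scalr, IHs; auto. Qed.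

Definition Dx pi x t := rsum (states n) (fun y => Rabs (Kpow n U t x y - pi y)).

Lemma contract pi x t T beta : stationary n U pi -> In x (states n) -> 0 <= beta ->
  (forall z y, In z (states n) -> In y (states n) -> beta <= Kpow n U T z y) ->
  Dx pi x (t + T) <= (1 - 2 * INR n * beta) * Dx pi x t.
Proof. intros Hst Hx Hb Hlow. pose proof Hst as [Hp [H1 H2]]. unfold Dx.
  assert (E : forall y, In y (states n) -> Kpow n U (t + T) x y - pi y =
     rsum (states n) (fun z => (Kpow n U t x z - pi z) * (Kpow n U T z y - beta))).
  { intros y Hy. rewrite Kpow_add; auto.
    rewrite (rsum_ext _ (fun z => (Kpow n U t x z - pi z) * (Kpow n U T z y - beta)) (fun z => Kpow n U t x z * Kpow n U T z y - pi z * Kpow n U T z y - (Kpow n U t x z - pi z) * beta)) by (intros; ring).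
    rewrite !rsum_minus, (stat_pow pi), rsum_scalr, rsum_minus, Kpow_rowsum, H1; auto. ring. }
  rewrite (rsum_ext _ _ (fun y => Rabs (rsum (states n) (fun z => (Kpow n U t x z - pi z) * (Kpow n U T z y - beta))))).
  2:{ intros y Hy. rewrite E; auto. }
  eapply Rle_trans. apply rsum_le. intros y Hy. apply rsum_abs.
  rewrite rsum_exchange.
  rewrite <- rsum_scal. apply rsum_le. intros z Hz.
  rewrite (rsum_ext _ _ (fun y => Rabs (Kpow n U t x z - pi z) * (Kpow n U T z y - beta))).
  2:{ intros y Hy. rewrite Rabs_mult. rewrite (Rabs_right (Kpow n U T z y - beta)); auto. apply Rle_ge. specialize (Hlow z y Hz Hy). lra. }
  rewrite rsum_scal, rsum_minus, Kpow_rowsum, rsum_const, states_length; auto. rewrite mult_INR. simpl (INR 2). lra. Qed.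
End Chain.
Section Pos.
Variables (n U : nat).
Hypothesis Hn : (3 <= n)%nat.
Hypothesis HU : (3 <= U)%nat.

Definition isb (p : nat) : bool := (Nat.eqb p 0 || Nat.eqb p (n-1) || Nat.eqb p n || Nat.eqb p (2*n-1))%bool.
Definition st (p : nat) : state := if Nat.ltb p n then (false, S p) else (true, (2*n - p)%nat).
Definition padd (p k : nat) : nat := if Nat.ltb (p + k) (2*n) then (p + k)%nat else (p + k - 2*n)%nat.
Definition ppred (p : nat) : nat := if Nat.eqb p 0 then (2*n-1)%nat else (p - 1)%nat.
Definition prefl (p : nat) : nat := if Nat.ltb p (2*n-1) then (2*n-2-p)%nat else (2*n-1)%nat.

Lemma st_in p : (p < 2*n)%nat -> In (st p) (states n).
Proof. intros. unfold st. destruct (Nat.ltb_spec p n); apply in_states; lia. Qed.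
Lemma st_inj p q : (p < 2*n)%nat -> (q < 2*n)%nat -> st p = st q -> p = q.
Proof. intros. unfold st in *. destruct (Nat.ltb_spec p n), (Nat.ltb_spec q n); inversion H1; lia. Qed.
Lemma st_surj s : In s (states n) -> exists p, (p < 2*n)%nat /\ s = st p.
Proof. destruct s as [b i]. intros H. apply in_states in H. destruct b.
  - exists (2*n - i)%nat. split; [lia|]. unfold st. destruct (Nat.ltb_spec (2*n-i) n); [lia|]. f_equal; lia.
  - exists (i - 1)%nat. split; [lia|]. unfold st. destruct (Nat.ltb_spec (i-1) n); [|lia]. f_equal; lia. Qed.

Ltac posK :=
  unfold Kp, Defs.ind, state_eqb, st, padd, prefl, isb in *; cbn [fst snd] in *;
  repeat (match goal with
          | |- context [Nat.ltb ?a ?b] => destruct (Nat.ltb_spec a b)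
          | H : context [Nat.ltb ?a ?b] |- _ => destruct (Nat.ltb_spec a b)
          | H : context [Nat.eqb ?a ?b] |- _ => destruct (Nat.eqb_spec a b)
          | |- context [Nat.eqb ?a ?b] => destruct (Nat.eqb_spec a b)
          end; cbn [fst snd] in *; try lia); simpl; try lia.

Lemma Ufacts : 0 < 1 / INR U /\ 1 / INR U <= 1/3 /\ 1 / (2 * INR U) = (1/2) * (1 / INR U).
Proof. pose proof (U_pos U HU). split; [apply Rdiv_lt_0_compat; lra|]. split; [unfold Rdiv; rewrite !Rmult_1_l; apply Rinv_le_contravar; lra|field; lra]. Qed.

Lemma KL_adv p : (p < 2*n)%nat -> (1 - 1 / INR U) / 2 <= Kp n U (st p) (st (padd p 1)).
Proof. intros Hp. pose proof Ufacts as [U1 [U2 U3]]. posK; lra. Qed.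
Lemma KL_hold p : (p < 2*n)%nat -> isb p = false -> 1/2 <= Kp n U (st p) (st p).
Proof. intros Hp Hb. pose proof Ufacts as [U1 [U2 U3]].
  unfold isb in Hb. repeat rewrite Bool.orb_false_iff in Hb. destruct Hb as [[[B1 B2] B3] B4].
  apply Nat.eqb_neq in B1, B2, B3, B4. posK; lra. Qed.
Lemma KL_jump p : (p < 2*n)%nat -> prefl p <> p -> 1 / (2 * INR U) <= Kp n U (st p) (st (prefl p)).
Proof. intros Hp Hr. pose proof Ufacts as [U1 [U2 U3]]. posK; lra. Qed.
Lemma KL_fix p : (p < 2*n)%nat -> prefl p = p -> 1 / (2 * INR U) <= Kp n U (st p) (st p).
Proof. intros Hp Hr. pose proof Ufacts as [U1 [U2 U3]]. posK; lra. Qed.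
End Pos.
Section Zfun.
Variables (n U x : nat).
Hypothesis Hn : (3 <= n)%nat.
Hypothesis HU : (3 <= U)%nat.
Hypothesis Hx : (x < 2*n)%nat.
Let sinj := st_inj n U Hn HU.
Let sin := st_in n U Hn HU.
Let KLadv := KL_adv n U Hn HU.
Let KLhold := KL_hold n U Hn HU.
Let KLjump := KL_jump n U Hn HU.
Let KLfix := KL_fix n U Hn HU.

Ltac dest := repeat match goal with
  | |- context [Nat.ltb ?a ?b] => destruct (Nat.ltb_spec a b)
  | |- context [Nat.eqb ?a ?b] => destruct (Nat.eqb_spec a b)
  | H : context [Nat.ltb ?a ?b] |- _ => destruct (Nat.ltb_spec a b)
  | H : context [Nat.eqb ?a ?b] |- _ => destruct (Nat.eqb_spec a b)
  end.

Lemma ppred_lt p : (p < 2*n)%nat -> (ppred n p < 2*n)%nat.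
Proof. unfold ppred. destruct (Nat.eqb_spec p 0); lia. Qed.
Lemma prefl_lt p : (p < 2*n)%nat -> (prefl n p < 2*n)%nat.
Proof. unfold prefl. destruct (Nat.ltb_spec p (2*n-1)); lia. Qed.
Lemma padd_ppred p : (p < 2*n)%nat -> padd n (ppred n p) 1 = p.
Proof. unfold padd, ppred. dest; lia. Qed.
Lemma prefl_inv p : (p < 2*n)%nat -> prefl n (prefl n p) = p.
Proof. unfold prefl. dest; lia. Qed.
Lemma prefl_ppred p : (p < 2*n)%nat -> prefl n p <> ppred n p.
Proof. unfold prefl, ppred. destruct (Nat.ltb_spec p (2*n-1)); destruct (Nat.eqb_spec p 0); lia. Qed.
Lemma ppred_neq p : (p < 2*n)%nat -> ppred n p <> p.
Proof. unfold ppred. destruct (Nat.eqb_spec p 0); lia. Qed.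
Lemma prefl_fix_isb p : (p < 2*n)%nat -> prefl n p = p -> isb n p = true.
Proof. unfold prefl, isb. intros Hp. destruct (Nat.ltb_spec p (2*n-1)); intros E.
  - assert (p = n - 1)%nat by lia. subst. rewrite (Nat.eqb_refl (n-1)). rewrite !Bool.orb_true_r. auto.
  - assert (p = 2*n - 1)%nat by lia. subst. rewrite Nat.eqb_refl. rewrite !Bool.orb_true_r. auto. Qed.

Definition hw (p : nat) : R := if isb n p then 0 else 1/2.
Definition aw : R := (1 - 1 / INR U) / 2.
Definition jw : R := 1 / (2 * INR U).

Fixpoint Z0 (t p : nat) : R := match t with
  | O => if Nat.eqb p x then 1 else 0
  | S t' => hw p * Z0 t' p + aw * Z0 t' (ppred n p) end.
Fixpoint Z1q (q t p : nat) : R := match t with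
  | O => 0
  | S t' => hw p * Z1q q t' p + aw * Z1q q t' (ppred n p) + (if Nat.eqb q (prefl n p) then jw * Z0 t' q else 0) end.
Definition W t p := Z0 t p + sN (fun q => Z1q q t p) (2*n).

Lemma weights_nonneg : 0 <= aw /\ 0 < jw /\ (forall p, 0 <= hw p).
Proof. pose proof (Ufacts U HU) as [U1 [U2 U3]]. unfold aw, jw, hw. split; [lra|]. split; [lra|]. intros p; destruct (isb n p); lra. Qed.

Lemma Z0_nonneg t p : 0 <= Z0 t p.
Proof. pose proof weights_nonneg as [A [J H]]. revert p; induction t; intros p; simpl.
  - destruct (Nat.eqb p x); lra.
  - specialize (H p). pose proof (IHt p). pose proof (IHt (ppred n p)). nra. Qed.
Lemma Z1q_nonneg q t p : 0 <= Z1q q t p.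
Proof. pose proof weights_nonneg as [A [J H]]. revert p; induction t; intros p; simpl; [lra|].
  specialize (H p). pose proof (IHt p). pose proof (IHt (ppred n p)). pose proof (Z0_nonneg t q).
  destruct (Nat.eqb q (prefl n p)); nra. Qed.
Lemma W_ge_Z0 t p : Z0 t p <= W t p.
Proof. unfold W. assert (0 <= sN (fun q => Z1q q t p) (2*n)) by (apply sN_nonneg; intros; apply Z1q_nonneg). lra. Qed.

Lemma W_S t p : (p < 2*n)%nat -> W (S t) p = hw p * W t p + aw * W t (ppred n p) + jw * Z0 t (prefl n p).
Proof. intros Hp. unfold W. simpl Z0.
  rewrite (sN_ext (fun q => Z1q q (S t) p) (fun q => (hw p * Z1q q t p + aw * Z1q q t (ppred n p)) + (if Nat.eqb q (prefl n p) then jw * Z0 t q else 0))).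
  2:{ intros j _. reflexivity. }
  rewrite sN_plus, sN_plus, sN_scal, sN_scal. rewrite (sN_ind (fun q => jw * Z0 t q)). ring. apply prefl_lt; auto. Qed.

Lemma prod_le a A b B : 0 <= a -> a <= A -> 0 <= b -> b <= B -> a * b <= A * B.
Proof. intros. apply Rmult_le_compat; auto. Qed.

Lemma rsum3 f a b c : NoDup [a; b; c] -> In a (states n) -> In b (states n) -> In c (states n) ->
  (forall z, In z (states n) -> 0 <= f z) -> f a + f b + f c <= rsum (states n) f.
Proof. intros. eapply Rle_trans; [|apply (rsum_sub state_dec [a;b;c])]; auto.
  - rewrite !rsum_cons, rsum_nil. lra.
  - intros z [->|[->|[->|[]]]]; auto. Qed.
Lemma rsum2 f a b : a <> b -> In a (states n) -> In b (states n) ->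
  (forall z, In z (states n) -> 0 <= f z) -> f a + f b <= rsum (states n) f.
Proof. intros. eapply Rle_trans; [|apply (rsum_sub state_dec [a;b])]; auto.
  - rewrite !rsum_cons, rsum_nil. lra.
  - constructor; [intros [->|[]]; congruence|constructor; [intros []|constructor]].
  - intros z [->|[->|[]]]; auto. Qed.

Lemma Kpow_ge_W t p : (p < 2*n)%nat -> W t p <= Kpow n U t (st n x) (st n p).
Proof. revert p. induction t; intros p Hp.
  - unfold W. simpl. rewrite sN_zero. destruct (Nat.eqb_spec p x).
    + subst. rewrite state_eqb_refl. lra.
    + rewrite state_eqb_false; [lra|]. intro E. apply sinj in E; auto; lia.
  - rewrite W_S; auto. simpl Kpow.
    pose proof weights_nonneg as [A [J H]].
    assert (Hq := ppred_lt p Hp). assert (Hr := prefl_lt p Hp).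
    assert (Fnn : forall z, In z (states n) -> 0 <= Kpow n U t (st n x) z * Kp n U z (st n p)).
    { intros. apply Rmult_le_pos; [apply Kpow_nonneg|apply Kp_nonneg]; auto. }
    assert (Wnn : forall q, 0 <= W t q) by (intros q; pose proof (Z0_nonneg t q); pose proof (W_ge_Z0 t q); lra).
    assert (T1 : hw p * W t p <= Kpow n U t (st n x) (st n p) * Kp n U (st n p) (st n p)).
    { unfold hw. destruct (isb n p) eqn:B.
      - rewrite Rmult_0_l. apply Rmult_le_pos; [apply Kpow_nonneg|apply Kp_nonneg]; auto.
      - rewrite Rmult_comm. apply prod_le; [apply Wnn|apply IHt; auto|lra|apply KLhold; auto]. }
    assert (T2 : aw * W t (ppred n p) <= Kpow n U t (st n x) (st n (ppred n p)) * Kp n U (st n (ppred n p)) (st n p)).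
    { rewrite Rmult_comm. apply prod_le; [apply Wnn|apply IHt; auto|auto|].
      rewrite <- (padd_ppred p Hp) at 2. apply KLadv; auto. }
    destruct (Nat.eq_dec (prefl n p) p) as [Efix|Enf].
    + assert (isb n p = true) by (apply prefl_fix_isb; auto). unfold hw in *. rewrite H0 in *. rewrite Efix.
      assert (T3 : jw * Z0 t p <= Kpow n U t (st n x) (st n p) * Kp n U (st n p) (st n p)).
      { rewrite Rmult_comm. apply prod_le; [apply Z0_nonneg| |lra|apply KLfix; auto].
        eapply Rle_trans; [apply W_ge_Z0|apply IHt; auto]. }
      assert (Nab : st n p <> st n (ppred n p)) by (intro E; apply sinj in E; [apply (ppred_neq p Hp); symmetry; exact E|lia|lia]).
      eapply Rle_trans; [|apply (rsum2 (fun z => Kpow n U t (st n x) z * Kp n U z (st n p)) (st n p) (st n (ppred n p)) Nab (sin p Hp) (sin _ Hq) Fnn)].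
      lra.
    + assert (T3 : jw * Z0 t (prefl n p) <= Kpow n U t (st n x) (st n (prefl n p)) * Kp n U (st n (prefl n p)) (st n p)).
      { rewrite Rmult_comm. apply prod_le; [apply Z0_nonneg| |lra|].
        eapply Rle_trans; [apply W_ge_Z0|apply IHt; auto].
        rewrite <- (prefl_inv p Hp) at 2. apply KLjump; auto. rewrite prefl_inv; auto. }
      assert (ND : NoDup [st n p; st n (ppred n p); st n (prefl n p)]).
      { assert (N1 := ppred_neq p Hp). assert (N2 := prefl_ppred p Hp).
        constructor; [intros [E|[E|[]]]; apply sinj in E; lia|].
        constructor; [intros [E|[]]; apply sinj in E; lia|].
        constructor; [intros []|constructor]. }
      eapply Rle_trans; [|apply (rsum3 (fun z => Kpow n U t (st n x) z * Kp n U z (st n p)) (st n p) (st n (ppred n p)) (st n (prefl n p)) ND (sin p Hp) (sin _ Hq) (sin _ Hr) Fnn)].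
      lra. Qed.
End Zfun.
Fixpoint Cr (m k : nat) : R := match m, k with
  | _, O => 1
  | O, S _ => 0
  | S m', S k' => Cr m' k' + Cr m' (S k') end.
Lemma Cr_0r m : Cr m 0 = 1. Proof. destruct m; reflexivity. Qed.
Lemma Cr_SS m k : Cr (S m) (S k) = Cr m k + Cr m (S k). Proof. reflexivity. Qed.
Lemma Cr_nonneg m k : 0 <= Cr m k.
Proof. revert k; induction m; intros k; destruct k; simpl; try lra. pose proof (IHm k); pose proof (IHm (S k)); lra. Qed.
Lemma Cr_big m k : (m < k)%nat -> Cr m k = 0.
Proof. revert k; induction m; intros k H; destruct k; simpl; try lia; auto. rewrite !IHm; lia || lra. Qed.
Lemma Cr_diag m : Cr m m = 1.
Proof. induction m; simpl; auto. rewrite IHm, Cr_big; lia || lra. Qed.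
Lemma Cr_mono m k : Cr m k <= Cr (S m) k.
Proof. destruct k; [rewrite !Cr_0r; lra|]. rewrite Cr_SS. pose proof (Cr_nonneg m k). lra. Qed.

Definition NN (H s : nat) : R := match s with
  | O => if Nat.eqb H 0 then 1 else 0
  | S s' => Cr (H + s') H end.
Lemma NN_0 s : NN 0 s = 1. Proof. destruct s; simpl; auto. apply Cr_0r. Qed.
Lemma NN_S0 H : NN (S H) 0 = 0. Proof. reflexivity. Qed.
Lemma NN_rec H s : NN (S H) (S s) = NN H (S s) + NN (S H) s.
Proof. destruct s; cbn [NN].
  - rewrite Nat.add_0_r, Nat.add_0_r, Cr_diag, Cr_diag. simpl. lra.
  - replace (S H + S s)%nat with (S (H + S s)) by lia. rewrite Cr_SS. replace (S H + s)%nat with (H + S s)%nat by lia. lra. Qed.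
Lemma NN_1r H : NN H 1 = 1.
Proof. cbn [NN]. rewrite Nat.add_0_r. apply Cr_diag. Qed.
Lemma NN_nonneg H s : 0 <= NN H s.
Proof. destruct s; simpl; [destruct (Nat.eqb H 0); lra|apply Cr_nonneg]. Qed.
Lemma NN_monoS H s : NN H s <= NN H (S s).
Proof. destruct s; cbn [NN].
  - rewrite Nat.add_0_r, Cr_diag. destruct (Nat.eqb H 0); lra.
  - replace (H + S s)%nat with (S (H + s)) by lia. apply Cr_mono. Qed.
Lemma NN_mono H s s' : (s <= s')%nat -> NN H s <= NN H s'.
Proof. intros Hs. induction Hs; [lra|]. pose proof (NN_monoS H m). lra. Qed.
Lemma NN_1 s : (1 <= s)%nat -> 1 <= NN 1 s.
Proof. intros Hs. destruct s; [lia|]. cbn [NN Nat.add]. rewrite Cr_SS, Cr_0r. pose proof (Cr_nonneg s 1). lra. Qed.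

Section Closed.
Variables (n U x : nat).
Hypothesis Hn : (3 <= n)%nat.
Hypothesis HU : (3 <= U)%nat.
Hypothesis Hx : (x < 2*n)%nat.

Definition ib (p : nat) : nat := if isb n p then 0%nat else 1%nat.
Fixpoint s0 (p k : nat) : nat := match k with O => ib p | S k' => (s0 p k' + ib (padd n p (S k')))%nat end.

Lemma padd_0 p : (p < 2*n)%nat -> padd n p 0 = p.
Proof. unfold padd. destruct (Nat.ltb_spec (p+0) (2*n)); lia. Qed.
Lemma padd_lt p k : (p < 2*n)%nat -> (k < 2*n)%nat -> (padd n p k < 2*n)%nat.
Proof. unfold padd. destruct (Nat.ltb_spec (p+k) (2*n)); lia. Qed.
Lemma ppred_padd p k : (p < 2*n)%nat -> (S k < 2*n)%nat -> ppred n (padd n p (S k)) = padd n p k.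
Proof. unfold padd, ppred. intros. repeat match goal with
  | |- context [Nat.ltb ?a ?b] => destruct (Nat.ltb_spec a b)
  | |- context [Nat.eqb ?a ?b] => destruct (Nat.eqb_spec a b) end; lia. Qed.

Definition wv : R := 1 - 1 / INR U.
Lemma wv_facts : 0 < wv <= 1 /\ aw U = wv / 2 /\ jw U = / 2 * (1 / INR U) /\ 0 < 1 / INR U.
Proof. pose proof (Ufacts U HU) as [U1 [U2 U3]]. unfold wv, aw, jw. split; [lra|]. split; [lra|]. split; [lra|lra]. Qed.

Lemma Z0_closed t k : (k <= t)%nat -> (k < 2*n)%nat ->
  (/2)^t * wv^k * NN (t - k) (s0 x k) <= Z0 n U x t (padd n x k).
Proof. pose proof wv_facts as [[W1 W2] [Ea [Ej U1]]].
  assert (Hpow : forall m, 0 <= wv ^ m) by (intros; apply pow_le; lra).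
  assert (H2 : forall m, 0 <= (/2) ^ m) by (intros; apply pow_le; lra).
  pose proof (weights_nonneg n U HU) as [A [J Hh]].
  assert (Z0n := Z0_nonneg n U x HU).
  revert k. induction t; intros k Hk Hk2.
  - assert (k = 0%nat) by lia. subst. simpl. rewrite padd_0, Nat.eqb_refl, NN_0; auto. lra.
  - destruct k as [|k].
    + rewrite padd_0; auto. cbn [Z0 s0]. unfold ib, hw. specialize (IHt 0%nat ltac:(lia) Hk2).
      rewrite padd_0 in IHt; auto. cbn [s0] in IHt. unfold ib in IHt.
      pose proof (Z0n t x). pose proof (Z0n t (ppred n x)).
      destruct (isb n x).
      * rewrite Nat.sub_0_r, NN_S0. rewrite Rmult_0_r. nra.
      * rewrite Nat.sub_0_r, NN_1r. rewrite Nat.sub_0_r, NN_1r in IHt. simpl pow in *. nra.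
    + cbn [Z0 s0]. rewrite ppred_padd; auto.
      set (P := padd n x (S k)). set (s := s0 x k).
      assert (IHk := IHt k ltac:(lia) ltac:(lia)). fold s in IHk.
      replace (S t - S k)%nat with (t - k)%nat by lia.
      pose proof (Z0n t P). pose proof (Z0n t (padd n x k)).
      unfold ib, hw. destruct (isb n P) eqn:B.
      * rewrite Nat.add_0_r.
        assert (E : (/ 2) ^ S t * wv ^ S k * NN (t - k) s = aw U * ((/ 2) ^ t * wv ^ k * NN (t - k) s)) by (rewrite Ea; cbn [pow]; field).
        rewrite E. assert (aw U * ((/ 2) ^ t * wv ^ k * NN (t - k) s) <= aw U * Z0 n U x t (padd n x k)) by (apply Rmult_le_compat_l; auto). nra.
      * replace (s + 1)%nat with (S s) by lia.
        destruct (le_lt_dec (S k) t) as [Hle|Hlt].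
        -- assert (IH2 := IHt (S k) Hle Hk2). cbn [s0] in IH2. fold P s in IH2. unfold ib in IH2. rewrite B in IH2.
           replace (s + 1)%nat with (S s) in IH2 by lia.
           replace (t - k)%nat with (S (t - S k)) by lia. rewrite NN_rec.
           assert (E : (/ 2) ^ S t * wv ^ S k * (NN (t - S k) (S s) + NN (S (t - S k)) s) =
             / 2 * ((/ 2) ^ t * wv ^ S k * NN (t - S k) (S s)) + aw U * ((/ 2) ^ t * wv ^ k * NN (S (t - S k)) s)) by (rewrite Ea; cbn [pow]; field).
           rewrite E. replace (S (t - S k)) with (t - k)%nat by lia.
           assert (aw U * ((/ 2) ^ t * wv ^ k * NN (t - k) s) <= aw U * Z0 n U x t (padd n x k)) by (apply Rmult_le_compat_l; auto). nra.
        -- assert (k = t) by lia. subst k. rewrite Nat.sub_diag, NN_0. rewrite Nat.sub_diag, NN_0 in IHk.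
           assert (E : (/ 2) ^ S t * wv ^ S t * 1 = aw U * ((/ 2) ^ t * wv ^ t * 1)) by (rewrite Ea; cbn [pow]; field).
           rewrite E. assert (aw U * ((/ 2) ^ t * wv ^ t * 1) <= aw U * Z0 n U x t (padd n x t)) by (apply Rmult_le_compat_l; auto). nra.
Qed.

Lemma Z1_closed A1 t A2 : (A1 < 2*n)%nat -> (A1 + A2 + 1 <= t)%nat -> (A2 < 2*n)%nat ->
  (/2)^t * wv^(A1+A2) * (1 / INR U) * NN (t - 1 - (A1 + A2)) (s0 x A1 + s0 (prefl n (padd n x A1)) A2)
  <= Z1q n U x (padd n x A1) t (padd n (prefl n (padd n x A1)) A2).
Proof. intros HA1. pose proof wv_facts as [[W1 W2] [Ea [Ej U1]]].
  assert (Hpow : forall m, 0 <= wv ^ m) by (intros; apply pow_le; lra).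
  assert (H2 : forall m, 0 <= (/2) ^ m) by (intros; apply pow_le; lra).
  pose proof (weights_nonneg n U HU) as [A [J Hh]].
  assert (Z1n := Z1q_nonneg n U x HU).
  assert (UNZ : INR U <> 0) by (pose proof (U_pos U HU); lra).
  set (q := padd n x A1). set (r := prefl n q).
  assert (Hq : (q < 2*n)%nat) by (apply padd_lt; auto).
  assert (Hr : (r < 2*n)%nat) by (apply (prefl_lt n U x); auto).
  assert (Hrr : prefl n r = q) by (apply (prefl_inv n U x); auto).
  set (sx := s0 x A1).
  revert A2. induction t; intros A2 Ht HA2; [lia|].
  destruct A2 as [|a].
  - rewrite padd_0; auto. cbn [Z1q]. rewrite Hrr, Nat.eqb_refl.
    assert (J0 := Z0_closed t A1 ltac:(lia) HA1). fold q sx in J0.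
    pose proof (Z1n q t r). pose proof (Z1n q t (ppred n r)).
    rewrite Nat.add_0_r. replace (S t - 1 - A1)%nat with (t - A1)%nat by lia. cbn [s0]. unfold ib, hw.
    destruct (isb n r) eqn:B.
    + rewrite Nat.add_0_r.
      assert (E : (/ 2) ^ S t * wv ^ A1 * (1 / INR U) * NN (t - A1) sx = jw U * ((/ 2) ^ t * wv ^ A1 * NN (t - A1) sx)) by (rewrite Ej; cbn [pow]; field; auto).
      rewrite E. assert (jw U * ((/ 2) ^ t * wv ^ A1 * NN (t - A1) sx) <= jw U * Z0 n U x t q) by (apply Rmult_le_compat_l; lra). nra.
    + replace (sx + 1)%nat with (S sx) by lia.
      destruct (le_lt_dec (A1 + 0 + 1) t) as [Hle|Hlt].
      * assert (IH := IHt 0%nat Hle ltac:(lia)). rewrite padd_0 in IH; auto. cbn [s0] in IH. unfold ib in IH. rewrite B in IH.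
        rewrite Nat.add_0_r in IH. replace (sx + 1)%nat with (S sx) in IH by lia.
        replace (t - A1)%nat with (S (t - 1 - A1)) by lia. rewrite NN_rec.
        assert (E : (/ 2) ^ S t * wv ^ A1 * (1 / INR U) * (NN (t - 1 - A1) (S sx) + NN (S (t - 1 - A1)) sx) =
          / 2 * ((/ 2) ^ t * wv ^ A1 * (1 / INR U) * NN (t - 1 - A1) (S sx)) + jw U * ((/ 2) ^ t * wv ^ A1 * NN (S (t - 1 - A1)) sx)) by (rewrite Ej; cbn [pow]; field; auto).
        rewrite E. replace (S (t - 1 - A1)) with (t - A1)%nat by lia.
        assert (jw U * ((/ 2) ^ t * wv ^ A1 * NN (t - A1) sx) <= jw U * Z0 n U x t q) by (apply Rmult_le_compat_l; lra). nra.
      * assert (A1 = t) by lia. subst t. rewrite Nat.sub_diag, NN_0. rewrite Nat.sub_diag, NN_0 in J0.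
        assert (E : (/ 2) ^ S A1 * wv ^ A1 * (1 / INR U) * 1 = jw U * ((/ 2) ^ A1 * wv ^ A1 * 1)) by (rewrite Ej; cbn [pow]; field; auto).
        rewrite E. assert (jw U * ((/ 2) ^ A1 * wv ^ A1 * 1) <= jw U * Z0 n U x A1 q) by (apply Rmult_le_compat_l; lra). nra.
  - cbn [Z1q s0]. rewrite ppred_padd; auto.
    set (P := padd n r (S a)). set (sr := s0 r a).
    assert (IHa := IHt a ltac:(lia) ltac:(lia)). fold sr in IHa.
    replace (S t - 1 - (A1 + S a))%nat with (t - 1 - (A1 + a))%nat by lia.
    replace (A1 + S a)%nat with (S (A1 + a)) by lia.
    pose proof (Z1n q t P). pose proof (Z1n q t (padd n r a)).
    assert (Jn : 0 <= (if Nat.eqb q (prefl n P) then jw U * Z0 n U x t q else 0)).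
    { destruct (Nat.eqb q (prefl n P)); [apply Rmult_le_pos; [lra|apply Z0_nonneg; auto]|lra]. }
    unfold ib, hw. destruct (isb n P) eqn:B.
    + rewrite Nat.add_0_r.
      assert (E : (/ 2) ^ S t * wv ^ S (A1 + a) * (1 / INR U) * NN (t - 1 - (A1 + a)) (sx + sr) = aw U * ((/ 2) ^ t * wv ^ (A1 + a) * (1 / INR U) * NN (t - 1 - (A1 + a)) (sx + sr))) by (rewrite Ea; cbn [pow]; field; auto).
      rewrite E. assert (aw U * ((/ 2) ^ t * wv ^ (A1 + a) * (1 / INR U) * NN (t - 1 - (A1 + a)) (sx + sr)) <= aw U * Z1q n U x q t (padd n r a)) by (apply Rmult_le_compat_l; auto). nra.
    + replace (sx + (sr + 1))%nat with (S (sx + sr)) by lia.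
      destruct (le_lt_dec (A1 + S a + 1) t) as [Hle|Hlt].
      * assert (IH2 := IHt (S a) Hle HA2). cbn [s0] in IH2. fold P sr in IH2. unfold ib in IH2. rewrite B in IH2.
        replace (sx + (sr + 1))%nat with (S (sx + sr)) in IH2 by lia.
        replace (A1 + S a)%nat with (S (A1 + a)) in IH2 by lia.
        replace (t - 1 - (A1 + a))%nat with (S (t - 1 - S (A1 + a))) by lia. rewrite NN_rec.
        assert (E : (/ 2) ^ S t * wv ^ S (A1 + a) * (1 / INR U) * (NN (t - 1 - S (A1 + a)) (S (sx + sr)) + NN (S (t - 1 - S (A1 + a))) (sx + sr)) =
          / 2 * ((/ 2) ^ t * wv ^ S (A1 + a) * (1 / INR U) * NN (t - 1 - S (A1 + a)) (S (sx + sr))) + aw U * ((/ 2) ^ t * wv ^ (A1 + a) * (1 / INR U) * NN (S (t - 1 - S (A1 + a))) (sx + sr))) by (rewrite Ea; cbn [pow]; field; auto).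
        rewrite E. replace (S (t - 1 - S (A1 + a))) with (t - 1 - (A1 + a))%nat by lia.
        assert (aw U * ((/ 2) ^ t * wv ^ (A1 + a) * (1 / INR U) * NN (t - 1 - (A1 + a)) (sx + sr)) <= aw U * Z1q n U x q t (padd n r a)) by (apply Rmult_le_compat_l; auto). nra.
      * replace (t - 1 - (A1 + a))%nat with 0%nat by lia. replace (t - 1 - (A1 + a))%nat with 0%nat in IHa by lia. rewrite NN_0. rewrite NN_0 in IHa.
        assert (E : (/ 2) ^ S t * wv ^ S (A1 + a) * (1 / INR U) * 1 = aw U * ((/ 2) ^ t * wv ^ (A1 + a) * (1 / INR U) * 1)) by (rewrite Ea; cbn [pow]; field; auto).
        rewrite E. assert (aw U * ((/ 2) ^ t * wv ^ (A1 + a) * (1 / INR U) * 1) <= aw U * Z1q n U x q t (padd n r a)) by (apply Rmult_le_compat_l; auto). nra.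
Qed.
End Closed.
Section Count.
Variables (n : nat).
Hypothesis Hn : (3 <= n)%nat.

Ltac noif t := lazymatch t with context [if _ then _ else _] => fail | _ => idtac end.
Ltac brute := repeat (match goal with
  | |- context [Nat.ltb ?a ?b] => noif a; noif b; destruct (Nat.ltb_spec a b)
  | |- context [Nat.leb ?a ?b] => noif a; noif b; destruct (Nat.leb_spec a b)
  | |- context [Nat.eqb ?a ?b] => noif a; noif b; destruct (Nat.eqb_spec a b)
  end; try lia); simpl; try lia.

Definition ic (p c : nat) : nat := if Nat.leb p c then (c - p)%nat else (c + 2*n - p)%nat.
Definition icnt (p k : nat) : nat :=
  ((if Nat.leb (ic p 0) k then 1 else 0) + (if Nat.leb (ic p (n-1)) k then 1 else 0) +
   (if Nat.leb (ic p n) k then 1 else 0) + (if Nat.leb (ic p (2*n-1)) k then 1 else 0))%nat.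

Lemma s0_icnt p k : (p < 2*n)%nat -> (k < 2*n)%nat -> (s0 n p k + icnt p k)%nat = S k.
Proof. intros Hp. induction k; intros Hk.
  - simpl. unfold ib, isb, icnt, ic, padd. brute.
  - cbn [s0]. assert (IH := IHk ltac:(lia)).
    assert (E : (ib n (padd n p (S k)) + icnt p (S k) = icnt p k + 1)%nat).
    { unfold ib, isb, icnt, ic, padd. brute. }
    lia. Qed.

Lemma icnt_le p k : (icnt p k <= 4)%nat.
Proof. unfold icnt. repeat match goal with |- context [if ?b then _ else _] => destruct b end; lia. Qed.

Lemma s0_lower p k : (p < 2*n)%nat -> (k < 2*n)%nat -> (k <= s0 n p k + 3)%nat.
Proof. intros. pose proof (s0_icnt p k H H0). pose proof (icnt_le p k). lia. Qed.

Lemma s0_mono p k k' : (k <= k')%nat -> (s0 n p k <= s0 n p k')%nat.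
Proof. intros H. induction H; auto. cbn [s0]. lia. Qed.

Lemma s0_pos p k : (p < 2*n)%nat -> (2 <= k)%nat -> (1 <= s0 n p k)%nat.
Proof. intros Hp Hk. assert (1 <= s0 n p 2)%nat; [|pose proof (s0_mono p 2 k Hk); lia].
  cbn [s0]. unfold ib, isb, padd. brute. Qed.
End Count.
Definition Gm (m : nat) (g : nat -> R) : R := sN (fun j => Cr m j * g j) (S m).

Lemma Gm_ext m f g : (forall j, f j = g j) -> Gm m f = Gm m g.
Proof. intros H. unfold Gm. apply sN_ext. intros. rewrite H. auto. Qed.
Lemma Gm_lin m a b f g : Gm m (fun j => a * f j + b * g j) = a * Gm m f + b * Gm m g.
Proof. unfold Gm. rewrite (sN_ext _ (fun j => a * (Cr m j * f j) + b * (Cr m j * g j))) by (intros; ring).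
  rewrite sN_plus, !sN_scal. auto. Qed.
Lemma Gm_S m g : Gm (S m) g = Gm m g + Gm m (fun j => g (S j)).
Proof. unfold Gm. rewrite sN_shift. rewrite Cr_0r.
  rewrite (sN_ext (fun j => Cr (S m) (S j) * g (S j)) (fun j => Cr m j * g (S j) + Cr m (S j) * g (S j))) by (intros; rewrite Cr_SS; ring).
  rewrite sN_plus. rewrite (sN_shift (fun j => Cr m j * g j)). rewrite Cr_0r.
  cbn [sN]. rewrite (Cr_big m (S m)) by lia. ring. Qed.

Lemma G0 m : Gm m (fun _ => 1) = 2 ^ m.
Proof. induction m; [unfold Gm; simpl; lra|]. rewrite Gm_S, IHm. simpl. lra. Qed.
Lemma G1 m : 2 * Gm m INR = INR m * 2 ^ m.
Proof. induction m; [unfold Gm; simpl; lra|]. rewrite Gm_S.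
  assert (E1 : Gm m (fun j => INR (S j)) = 1 * Gm m INR + 1 * Gm m (fun _ => 1)) by (rewrite <- Gm_lin; apply Gm_ext; intros; rewrite S_INR; ring).
  rewrite E1, G0. rewrite S_INR. simpl pow. lra. Qed.
Lemma G2 m : 4 * Gm m (fun j => INR j * INR j) = INR m * (INR m + 1) * 2 ^ m.
Proof. induction m; [unfold Gm; simpl; lra|]. rewrite Gm_S.
  rewrite (Gm_ext m (fun j => INR (S j) * INR (S j)) (fun j => 1 * (INR j * INR j) + 1 * (2 * INR j + 1))) by (intros; rewrite S_INR; ring).
  rewrite Gm_lin.
  assert (E1 : Gm m (fun j => 2 * INR j + 1) = 2 * Gm m INR + 1 * Gm m (fun _ => 1)) by (rewrite <- Gm_lin; apply Gm_ext; intros; ring).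
  rewrite E1, G0. pose proof (G1 m). rewrite S_INR. simpl pow. nra. Qed.
Lemma Gvar m : Gm m (fun j => (2 * INR j - INR m) ^ 2) = INR m * 2 ^ m.
Proof. rewrite (Gm_ext m _ (fun j => 4 * (INR j * INR j) + 1 * (- 4 * INR m * INR j + INR m * INR m * 1))) by (intros; ring).
  rewrite Gm_lin.
  assert (E1 : Gm m (fun j => - 4 * INR m * INR j + INR m * INR m * 1) = (- 4 * INR m) * Gm m INR + (INR m * INR m) * Gm m (fun _ => 1)) by (rewrite <- Gm_lin; apply Gm_ext; intros; ring).
  rewrite E1, G0. pose proof (G1 m). pose proof (G2 m). nra. Qed.

Lemma full_sum m L : (S m <= L)%nat -> sN (Cr m) L = 2 ^ m.
Proof. intros H. rewrite (sN_zero_tail _ m L); [|intros; apply Cr_big; lia|lia].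
  rewrite <- G0. unfold Gm. apply sN_ext. intros; ring. Qed.

Lemma pair_even f L : sN f (2 * L) = sN (fun i => f (2 * i)%nat + f (2 * i + 1)%nat) L.
Proof. induction L; [reflexivity|]. replace (2 * S L)%nat with (S (S (2 * L))) by lia. cbn [sN]. rewrite IHL.
  replace (S (2 * L)) with (2 * L + 1)%nat by lia. ring. Qed.
Lemma pair_odd f L : sN f (S (2 * L)) = f O + sN (fun i => f (2 * i + 1)%nat + f (2 * i + 2)%nat) L.
Proof. induction L; [simpl; lra|]. replace (S (2 * S L)) with (S (S (S (2 * L)))) by lia. cbn [sN]. cbn [sN] in IHL. rewrite IHL.
  replace (S (2 * L)) with (2 * L + 1)%nat by lia. replace (S (2 * L + 1)) with (2 * L + 2)%nat by lia. ring. Qed.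

Lemma parity_full M r L : (1 <= M)%nat -> (r < 2)%nat -> (M <= L)%nat -> 2 * sN (fun i => Cr M (r + 2 * i)) L = 2 ^ M.
Proof. intros HM Hr HL. destruct M as [|m]; [lia|]. destruct r as [|[|r]]; [|simpl plus|lia].
  - destruct L as [|L]; [lia|]. rewrite sN_shift. simpl (Cr (S m) (0 + 2 * 0)).
    rewrite (sN_ext _ (fun i => Cr m (2 * i + 1) + Cr m (2 * i + 2))).
    2:{ intros j _. replace (0 + 2 * S j)%nat with (S (2 * j + 1)) by lia. rewrite Cr_SS. f_equal. f_equal. lia. }
    replace (1 + sN (fun i : nat => Cr m (2 * i + 1) + Cr m (2 * i + 2)) L) with (sN (Cr m) (S (2 * L))).
    rewrite full_sum by lia. simpl. lra. rewrite pair_odd, Cr_0r. auto.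
  - rewrite (sN_ext _ (fun i => Cr m (2 * i) + Cr m (2 * i + 1))).
    2:{ intros j _. simpl. f_equal. f_equal. lia. }
    rewrite <- pair_even, full_sum by lia. simpl. lra. Qed.

Lemma parity_le g r L : (r < 2)%nat -> (forall j, 0 <= g j) -> sN (fun i => g (r + 2 * i)%nat) L <= sN g (2 * L).
Proof. intros Hr Hg. rewrite pair_even. apply sN_le. intros j _. pose proof (Hg (2*j)%nat). pose proof (Hg (2*j+1)%nat).
  destruct r as [|[|r]]; [replace (0 + 2 * j)%nat with (2 * j)%nat by lia|replace (1 + 2 * j)%nat with (2 * j + 1)%nat by lia|lia]; lra. Qed.

Lemma tail_bound m r K L D : (r < 2)%nat -> (K <= L)%nat -> (S m <= 2 * L)%nat -> 0 < D ->
  (forall i, (K <= i)%nat -> D <= 2 * INR (r + 2 * i) - INR m) ->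
  sN (fun i => Cr m (r + 2 * i)) L - sN (fun i => Cr m (r + 2 * i)) K <= INR m * 2 ^ m / D ^ 2.
Proof. intros Hr HKL Hm HD Hi.
  set (g := fun j => Cr m j * (2 * INR j - INR m) ^ 2 / D ^ 2).
  assert (Hg : forall j, 0 <= g j). { intros j. unfold g. apply Rmult_le_pos; [apply Rmult_le_pos; [apply Cr_nonneg|apply pow2_ge_0]|].
    apply Rlt_le, Rinv_0_lt_compat, pow_lt; lra. }
  replace L with (K + (L - K))%nat at 1 by lia. rewrite sN_split.
  assert (T1 : sN (fun i => Cr m (r + 2 * (K + i))) (L - K) <= sN (fun i => g (r + 2 * (K + i))%nat) (L - K)).
  { apply sN_le. intros i _. unfold g. specialize (Hi (K + i)%nat ltac:(lia)).
    assert (D ^ 2 <= (2 * INR (r + 2 * (K + i)) - INR m) ^ 2) by (apply pow_incr; lra).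
    pose proof (Cr_nonneg m (r + 2 * (K + i))).
    set (X := 2 * INR (r + 2 * (K + i)) - INR m) in *. set (c := Cr m (r + 2 * (K + i))) in *.
    replace (c * X ^ 2 / D ^ 2) with (c * (X ^ 2 / D ^ 2)) by (unfold Rdiv; ring).
    rewrite <- (Rmult_1_r c) at 1. apply Rmult_le_compat_l; auto.
    apply (Rmult_le_reg_r (D ^ 2)); [apply pow_lt; lra|].
    unfold Rdiv. rewrite Rmult_assoc, Rinv_l, Rmult_1_r, Rmult_1_l by (apply pow_nonzero; lra). lra. }
  assert (T2 : sN (fun i => g (r + 2 * (K + i))%nat) (L - K) <= sN (fun i => g (r + 2 * i)%nat) L).
  { replace L with (K + (L - K))%nat at 2 by lia. rewrite sN_split.
    assert (0 <= sN (fun i => g (r + 2 * i)%nat) K) by (apply sN_nonneg; auto). lra. }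
  assert (T3 := parity_le g r L Hr Hg).
  assert (T4 : sN g (2 * L) = INR m * 2 ^ m / D ^ 2).
  { rewrite (sN_zero_tail g m); [|intros; unfold g; rewrite Cr_big by auto; lra|lia].
    transitivity (/ D ^ 2 * Gm m (fun j => (2 * INR j - INR m) ^ 2)).
    - unfold Gm, g. rewrite <- sN_scal. apply sN_ext. intros; unfold Rdiv; ring.
    - rewrite Gvar. unfold Rdiv; ring. }
  lra. Qed.

Lemma div_le a b c : 0 < c -> a <= b * c -> a / c <= b.
Proof. intros Hc H. apply Rmult_le_reg_r with c; auto. unfold Rdiv. rewrite Rmult_assoc, Rinv_l, Rmult_1_r; lra. Qed.

Lemma cheb n r : (24 <= n)%nat -> (r < 2)%nat ->
  3 / 8 * 2 ^ (3 * n - 9) <= sN (fun i => Cr (3 * n - 9) (r + 2 * i)) (n - 2).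
Proof. intros Hn Hr. set (m := (3 * n - 9)%nat).
  assert (Full := parity_full m r m ltac:(unfold m; lia) Hr ltac:(lia)).
  assert (Tail := tail_bound m r (n - 2) m (INR n + 1) Hr ltac:(unfold m; lia) ltac:(unfold m; lia)).
  assert (HD : 0 < INR n + 1) by (pose proof (pos_INR n); lra).
  specialize (Tail HD).
  assert (Hi : forall i, (n - 2 <= i)%nat -> INR n + 1 <= 2 * INR (r + 2 * i) - INR m).
  { intros i Hi. unfold m. rewrite <- S_INR. replace (2 * INR (r + 2 * i)) with (INR (2 * (r + 2 * i))) by (rewrite mult_INR; simpl; ring).
    rewrite <- minus_INR by lia. apply le_INR. lia. }
  specialize (Tail Hi).
  assert (Hm : INR m * 2 ^ m / (INR n + 1) ^ 2 <= 1 / 8 * 2 ^ m).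
  { assert (Hn' : 24 <= INR n) by (replace 24 with (INR 24) by (simpl; lra); apply le_INR; auto).
    assert (Em : INR m = 3 * INR n - 9) by (unfold m; rewrite minus_INR by lia; rewrite mult_INR; simpl; ring).
    rewrite Em. assert (P2 : 0 < 2 ^ m) by (apply pow_lt; lra).
    apply div_le; [apply pow_lt; lra|]. simpl.
    replace (1 / 8 * 2 ^ m * ((INR n + 1) * ((INR n + 1) * 1))) with ((1 / 8 * ((INR n + 1) * ((INR n + 1) * 1))) * 2 ^ m) by ring.
    apply Rmult_le_compat_r; [lra|nra]. }
  lra. Qed.
Lemma pow_le_decr w a b : 0 <= w <= 1 -> (a <= b)%nat -> w ^ b <= w ^ a.
Proof. intros Hw H. induction H; [lra|]. simpl. pose proof (pow_le w m ltac:(lra)). nra. Qed.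

Lemma sN_first f k : (forall j, 0 <= f j) -> f O <= sN f (S k).
Proof. intros H. rewrite sN_shift. assert (0 <= sN (fun j => f (S j)) k) by (apply sN_nonneg; intros; apply H). lra. Qed.

Ltac noif t := lazymatch t with context [if _ then _ else _] => fail | _ => idtac end.
Section Doeb.
Variables (n U : nat).
Hypothesis Hn : (3 <= n)%nat.
Hypothesis HU : (3 <= U)%nat.

Lemma geom x y : (x < 2*n)%nat -> (y < 2*n)%nat ->
  exists r0 (A1f A2f : nat -> nat), (r0 < 2)%nat /\
   forall i, (i < n - 2)%nat ->
     (A1f i < 2*n)%nat /\ (A2f i < 2*n)%nat /\ (A1f i + A2f i + r0 + 2 * i = 3 * n - 2)%nat /\
     padd n (prefl n (padd n x (A1f i))) (A2f i) = y /\
     (forall j, (j < n - 2)%nat -> A1f i = A1f j -> i = j).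
Proof. intros Hx Hy.
  set (dd := if Nat.ltb (x + y + 2) (2*n) then (x+y+2)%nat else if Nat.ltb (x+y+2) (4*n) then (x+y+2-2*n)%nat else (x+y+2-4*n)%nat).
  assert (Hdd : (dd < 2*n)%nat /\ (x + y + 2 = dd \/ x + y + 2 = dd + 2*n \/ x + y + 2 = dd + 4*n)%nat).
  { unfold dd. destruct (Nat.ltb_spec (x+y+2) (2*n)); [|destruct (Nat.ltb_spec (x+y+2) (4*n))]; lia. }
  set (e := if Nat.leb dd n then dd else (2*n - dd)%nat).
  assert (He : (e <= n)%nat) by (unfold e; destruct (Nat.leb_spec dd n); lia).
  destruct (Nat.Even_or_Odd (3*n - 2 - e)) as [[h0 Hh]|[h0 Hh]].
  - exists 0%nat, (fun i => if Nat.leb dd n then (h0 - i)%nat else (h0 - i + e)%nat),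
           (fun i => if Nat.leb dd n then (h0 - i + dd)%nat else (h0 - i)%nat).
    split; [lia|]. intros i Hi. unfold e in *. unfold padd, prefl.
    repeat split; intros; repeat (match goal with
      | |- context [Nat.ltb ?a ?b] => noif a; noif b; destruct (Nat.ltb_spec a b)
      | |- context [Nat.leb ?a ?b] => noif a; noif b; destruct (Nat.leb_spec a b)
      | H : context [Nat.leb ?a ?b] |- _ => noif a; noif b; destruct (Nat.leb_spec a b)
      end); lia.
  - exists 1%nat, (fun i => if Nat.leb dd n then (h0 - i)%nat else (h0 - i + e)%nat),
           (fun i => if Nat.leb dd n then (h0 - i + dd)%nat else (h0 - i)%nat).
    split; [lia|]. intros i Hi. unfold e in *. unfold padd, prefl.
    repeat split; intros; repeat (match goal with
      | |- context [Nat.ltb ?a ?b] => noif a; noif b; destruct (Nat.ltb_spec a b)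
      | |- context [Nat.leb ?a ?b] => noif a; noif b; destruct (Nat.leb_spec a b)
      | H : context [Nat.leb ?a ?b] |- _ => noif a; noif b; destruct (Nat.leb_spec a b)
      end); lia.
Qed.

Lemma padd_inj x a b : (x < 2*n)%nat -> (a < 2*n)%nat -> (b < 2*n)%nat -> padd n x a = padd n x b -> a = b.
Proof. unfold padd. intros. destruct (Nat.ltb_spec (x+a) (2*n)), (Nat.ltb_spec (x+b) (2*n)); lia. Qed.

Lemma kbound x y : (x < 2*n)%nat -> (y < 2*n)%nat ->
  (/2)^69 * wv U ^ (3*n-1) * (1 / INR U) <= Kpow n U (3*n-1) (st n x) (st n y).
Proof. intros Hx Hy.
  destruct (geom x y Hx Hy) as [r0 [A1f [A2f [Hr0 G]]]].
  set (T := (3*n-1)%nat).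
  pose proof (wv_facts U HU) as [[W1 W2] [_ [_ U1]]].
  assert (S1 : sN (fun q => Z1q n U x q T y) (2*n) <= Kpow n U T (st n x) (st n y)).
  { eapply Rle_trans; [|apply (Kpow_ge_W n U x Hn HU Hx T y Hy)]. unfold W.
    pose proof (Z0_nonneg n U x HU T y). lra. }
  assert (S2 : sN (fun i => Z1q n U x (padd n x (A1f i)) T y) (n-2) <= sN (fun q => Z1q n U x q T y) (2*n)).
  { rewrite !sN_rsum. rewrite <- (rsum_map (fun i => padd n x (A1f i)) (seq 0 (n-2)) (fun q => Z1q n U x q T y)).
    apply (rsum_sub Nat.eq_dec).
    - apply NoDup_map_NoDup_ForallPairs; [|apply seq_NoDup].
      intros a b Ha Hb E. apply in_seq in Ha, Hb. destruct (G a ltac:(lia)) as [Ga1 [_ [_ [_ Ga]]]].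
      destruct (G b ltac:(lia)) as [Gb1 _]. apply Ga; [lia|]. apply (padd_inj x); auto.
    - intros q Hq. apply in_map_iff in Hq. destruct Hq as [i [<- Hi]]. apply in_seq in Hi.
      destruct (G i ltac:(lia)) as [Gi1 _]. apply in_seq. split; [lia|]. simpl. apply (padd_lt n U x); auto.
    - intros. apply Z1q_nonneg; auto. }
  set (Si := fun i => (s0 n x (A1f i) + s0 n (prefl n (padd n x (A1f i))) (A2f i))%nat).
  assert (S3 : forall i, (i < n - 2)%nat -> (/2)^T * wv U ^ T * (1 / INR U) * NN (r0 + 2 * i) (Si i) <= Z1q n U x (padd n x (A1f i)) T y).
  { intros i Hi. destruct (G i Hi) as [Ga1 [Ga2 [Gs [Gy _]]]].
    pose proof (Z1_closed n U x Hn HU Hx (A1f i) T (A2f i) Ga1 ltac:(unfold T; lia) Ga2) as Z.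
    rewrite Gy in Z. replace (T - 1 - (A1f i + A2f i))%nat with (r0 + 2 * i)%nat in Z by (unfold T; lia).
    eapply Rle_trans; [|exact Z]. fold (Si i).
    assert (wv U ^ T <= wv U ^ (A1f i + A2f i)) by (apply pow_le_decr; [lra|unfold T; lia]).
    pose proof (NN_nonneg (r0 + 2 * i) (Si i)). assert (0 <= (/ 2) ^ T) by (apply pow_le; lra).
    apply Rmult_le_compat_r; auto. apply Rmult_le_compat_r; [lra|]. apply Rmult_le_compat_l; auto. }
  assert (S4 : (/2)^T * wv U ^ T * (1 / INR U) * sN (fun i => NN (r0 + 2 * i) (Si i)) (n - 2) <= Kpow n U T (st n x) (st n y)).
  { rewrite <- sN_scal. eapply Rle_trans; [|apply S1]. eapply Rle_trans; [|apply S2]. apply sN_le. intros i Hi. apply S3; auto. }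
  assert (P1 : 0 <= wv U ^ T) by (apply pow_le; lra).
  assert (P0 : 0 < (/ 2) ^ 69) by (apply pow_lt; lra).
  destruct (le_lt_dec 24 n) as [Hbig|Hsmall].
  - assert (S5 : sN (fun i => Cr (3 * n - 9) (r0 + 2 * i)) (n - 2) <= sN (fun i => NN (r0 + 2 * i) (Si i)) (n - 2)).
    { apply sN_le. intros i Hi. destruct (G i Hi) as [Ga1 [Ga2 [Gs [Gy _]]]].
      assert (L1 := s0_lower n Hn x (A1f i) Hx Ga1).
      assert (L2 := s0_lower n Hn (prefl n (padd n x (A1f i))) (A2f i) ltac:(apply (prefl_lt n U x); auto; apply (padd_lt n U x); auto) Ga2).
      assert (HS : (S (3 * n - 9 - r0 - 2 * i) <= Si i)%nat) by (unfold Si; lia).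
      eapply Rle_trans; [|apply (NN_mono _ _ _ HS)]. cbn [NN]. replace (r0 + 2 * i + (3 * n - 9 - r0 - 2 * i))%nat with (3 * n - 9)%nat by lia. lra. }
    assert (S6 := cheb n r0 Hbig Hr0).
    assert (E : (/ 2) ^ T * 2 ^ (3 * n - 9) = (/ 2) ^ 8).
    { unfold T. replace (3 * n - 1)%nat with (8 + (3 * n - 9))%nat by lia. rewrite pow_add, Rmult_assoc, <- Rpow_mult_distr.
      replace (/ 2 * 2) with 1 by field. rewrite pow1. ring. }
    assert (F : (/ 2) ^ 69 <= 3 / 8 * (/ 2) ^ 8) by (simpl; lra).
    eapply Rle_trans; [|apply S4].
    assert (Q : (/ 2) ^ 69 <= (/ 2) ^ T * sN (fun i => NN (r0 + 2 * i) (Si i)) (n - 2)).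
    { assert (0 <= (/2)^T) by (apply pow_le; lra). eapply Rle_trans; [apply F|]. rewrite <- E.
      replace (3 / 8 * ((/ 2) ^ T * 2 ^ (3 * n - 9))) with ((/ 2) ^ T * (3 / 8 * 2 ^ (3 * n - 9))) by ring.
      apply Rmult_le_compat_l; auto. lra. }
    replace ((/ 2) ^ T * wv U ^ T * (1 / INR U) * sN (fun i => NN (r0 + 2 * i) (Si i)) (n - 2)) with
      (((/ 2) ^ T * sN (fun i => NN (r0 + 2 * i) (Si i)) (n - 2)) * wv U ^ T * (1 / INR U)) by ring.
    apply Rmult_le_compat_r; [lra|]. apply Rmult_le_compat_r; auto.
  - assert (S5 : 1 <= sN (fun i => NN (r0 + 2 * i) (Si i)) (n - 2)).
    { replace (n - 2)%nat with (S (n - 3)) by lia. eapply Rle_trans; [|apply sN_first; intros; apply NN_nonneg].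
      destruct (G 0%nat ltac:(lia)) as [Ga1 [Ga2 [Gs [Gy _]]]].
      replace (r0 + 2 * 0)%nat with r0 by lia. destruct r0 as [|[|r0]]; [rewrite NN_0; lra| |lia].
      apply NN_1. unfold Si.
      destruct (le_lt_dec 2 (A1f 0%nat)).
      + pose proof (s0_pos n Hn x (A1f 0%nat) Hx l). lia.
      + assert (2 <= A2f 0)%nat by lia.
        pose proof (s0_pos n Hn (prefl n (padd n x (A1f 0%nat))) (A2f 0%nat) ltac:(apply (prefl_lt n U x); auto; apply (padd_lt n U x); auto) H). lia. }
    assert (F : (/ 2) ^ 69 <= (/ 2) ^ T) by (apply pow_le_decr; [lra|unfold T; lia]).
    eapply Rle_trans; [|apply S4].
    replace ((/ 2) ^ T * wv U ^ T * (1 / INR U) * sN (fun i => NN (r0 + 2 * i) (Si i)) (n - 2)) with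
      (((/ 2) ^ T * sN (fun i => NN (r0 + 2 * i) (Si i)) (n - 2)) * wv U ^ T * (1 / INR U)) by ring.
    apply Rmult_le_compat_r; [lra|]. apply Rmult_le_compat_r; auto.
    assert (0 <= (/2)^T) by (apply pow_le; lra). nra.
Qed.
End Doeb.
Lemma exp_pow x k : exp x ^ k = exp (INR k * x).
Proof. induction k; simpl; [rewrite Rmult_0_l, exp_0; auto|]. rewrite IHk, <- exp_plus. f_equal. destruct k; simpl; ring. Qed.
Lemma exp_le a b : a <= b -> exp a <= exp b.
Proof. intros H. destruct (Rle_lt_or_eq_dec a b H) as [H' | ->]; [left; apply exp_increasing; auto|lra]. Qed.
Lemma fold_Rmax_le {A} (l : list A) f b : 0 <= b -> (forall x, List.In x l -> f x <= b) -> fold_right Rmax 0 (map f l) <= b.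
Proof. induction l; intros Hb H; simpl; auto. apply Rmax_lub; [apply H; simpl; auto|apply IHl; auto; intros; apply H; simpl; auto]. Qed.

Section Final.
Variables (n U : nat) (pi : state -> R).
Hypothesis Hn : (3 <= n)%nat.
Hypothesis HU : (3 <= U)%nat.
Hypothesis Hst : stationary n U pi.

Lemma D0_le x : List.In x (states n) -> Dx n U pi x 0 <= 2.
Proof. intros Hx. destruct Hst as [Hp [H1 _]]. unfold Dx. simpl Kpow.
  eapply Rle_trans. apply (rsum_le _ _ (fun y => (if state_eqb x y then 1 else 0) + pi y)).
  - intros y Hy. specialize (Hp y Hy). destruct (state_eqb x y); unfold Rabs; destruct (Rcase_abs _); lra.
  - rewrite rsum_plus, H1, (rsum_states_ind' n x (fun _ => 1) Hx). lra. Qed.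

Lemma D_mono x s : List.In x (states n) -> Dx n U pi x s <= Dx n U pi x 0.
Proof. intros Hx. induction s; [lra|]. replace (S s) with (s + 1)%nat by lia.
  eapply Rle_trans; [apply (contract n U Hn HU pi x s 1 0 Hst Hx); [lra|intros; apply Kpow_nonneg; auto]|]. lra. Qed.

Lemma D_iter x T beta j s : List.In x (states n) -> 0 <= beta -> 0 <= 1 - 2 * INR n * beta ->
  (forall z y, List.In z (states n) -> List.In y (states n) -> beta <= Kpow n U T z y) ->
  Dx n U pi x (j * T + s) <= (1 - 2 * INR n * beta) ^ j * Dx n U pi x s.
Proof. intros Hx Hb Hr Hlow. induction j; [simpl; lra|].
  replace (S j * T + s)%nat with ((j * T + s) + T)%nat by lia.
  eapply Rle_trans; [apply (contract n U Hn HU pi x _ T beta Hst Hx Hb Hlow)|]. simpl. nra. Qed.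
End Final.

Theorem lemma12 :
  forall c : R, 1 <= c ->
  exists C : R, 0 < C /\
    forall (n U : nat) (eps : R) (t : nat) (pi : state -> R),
      (3 <= n)%nat -> (3 <= U)%nat ->
      INR n / c <= INR U -> INR U <= c * INR n ->
      0 < eps -> eps <= 1/2 ->
      stationary n U pi ->
      C * INR n * ln (1 / eps) <= INR t ->
      vdist n U pi t <= eps.
Proof.
  intros c Hc.
  set (g := (/ 2) ^ 68 * exp (- (6 * c)) / c).
  assert (Hg0 : 0 < g) by (unfold g; apply Rdiv_lt_0_compat; [apply Rmult_lt_0_compat; [apply pow_lt; lra|apply exp_pos]|lra]).
  assert (Hg1 : g <= 1).
  { unfold g. assert (exp (- (6 * c)) <= 1) by (rewrite <- exp_0; apply exp_le; lra).
    assert ((/ 2) ^ 68 <= 1) by (rewrite <- (pow1 68); apply pow_incr; lra).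
    assert (0 < (/ 2) ^ 68) by (apply pow_lt; lra). pose proof (exp_pos (- (6 * c))).
    apply div_le; [lra|]. nra. }
  exists (6 / g + 6). split; [assert (0 < 6 / g) by (apply Rdiv_lt_0_compat; lra); lra|].
  intros n U eps t pi Hn HU Hnc HUc He He2 Hst Ht.
  assert (Rn : 3 <= INR n) by (replace 3 with (INR 3) by (simpl; lra); apply le_INR; auto).
  assert (RU : 3 <= INR U) by (replace 3 with (INR 3) by (simpl; lra); apply le_INR; auto).
  set (T := (3 * n - 1)%nat).
  assert (RT : INR T <= 3 * INR n) by (unfold T; rewrite minus_INR by lia; rewrite mult_INR; simpl; lra).
  assert (HT : (0 < T)%nat) by (unfold T; lia).
  assert (Hw : exp (- (6 * c)) <= wv U ^ T).
  { set (a := 1 / (INR U - 1)).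
    assert (Ha : 0 < a) by (unfold a; apply Rdiv_lt_0_compat; lra).
    assert (E1 : exp (- a) <= wv U).
    { assert (1 + a <= exp a) by apply exp_ineq1_le. rewrite exp_Ropp. unfold wv.
      assert (E : 1 - 1 / INR U = / (1 + a)) by (unfold a; field; lra). rewrite E.
      apply Rinv_le_contravar; lra. }
    eapply Rle_trans; [|apply pow_incr; split; [left; apply exp_pos|exact E1]].
    rewrite exp_pow. apply exp_le.
    assert (Hnc' : INR n <= c * INR U) by (apply (Rmult_le_compat_r c) in Hnc; [|lra]; unfold Rdiv in Hnc; rewrite Rmult_assoc, Rinv_l, Rmult_1_r in Hnc; lra).
    assert (INR T * a <= 6 * c).
    { unfold a. replace (INR T * (1 / (INR U - 1))) with (INR T / (INR U - 1)) by (field; lra). apply div_le; [lra|]. nra. }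
    lra. }
  set (beta := (/ 2) ^ 69 * exp (- (6 * c)) / (c * INR n)).
  assert (Hb : 0 <= beta) by (unfold beta; apply Rlt_le, Rdiv_lt_0_compat; [apply Rmult_lt_0_compat; [apply pow_lt; lra|apply exp_pos]|nra]).
  assert (Hlow : forall z y, List.In z (states n) -> List.In y (states n) -> beta <= Kpow n U T z y).
  { intros z y Hz Hy. destruct (st_surj n U Hn HU z Hz) as [p [Hp ->]]. destruct (st_surj n U Hn HU y Hy) as [q [Hq ->]].
    eapply Rle_trans; [|apply (kbound n U Hn HU p q Hp Hq)]. fold T. unfold beta.
    assert (P69 : 0 < (/ 2) ^ 69) by (apply pow_lt; lra).
    assert (Hu : / (c * INR n) <= 1 / INR U) by (unfold Rdiv; rewrite Rmult_1_l; apply Rinv_le_contravar; lra).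
    pose proof (exp_pos (- (6 * c))). assert (0 < / (c * INR n)) by (apply Rinv_0_lt_compat; nra).
    unfold Rdiv. rewrite Rmult_assoc. rewrite (Rmult_assoc ((/ 2) ^ 69)). apply Rmult_le_compat_l; [lra|].
    apply Rmult_le_compat; lra. }
  assert (Erho : 1 - 2 * INR n * beta = 1 - g).
  { unfold beta, g. simpl. field. split; lra. }
  set (k := (t / T)%nat).
  assert (Htk : t = (k * T + t mod T)%nat) by (unfold k; rewrite Nat.mul_comm; apply Nat.div_mod; lia).
  assert (Hmod : (t mod T < T)%nat) by (apply Nat.mod_upper_bound; lia).
  set (L := ln (1 / eps)). change (ln (1 / eps)) with L in Ht.
  assert (HL2 : ln 2 <= L).
  { unfold L. assert (2 <= 1 / eps) by (apply (Rmult_le_reg_r eps); [lra|]; unfold Rdiv; rewrite Rmult_assoc, Rinv_l, Rmult_1_r; lra).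
    destruct (Rle_lt_or_eq_dec 2 (1/eps) H) as [H'|H']; [left; apply ln_increasing; lra|rewrite H'; lra]. }
  pose proof ln_lt_2.
  assert (Hk : 2 * L / g <= INR k).
  { assert (Ht2 : INR t < INR T * (INR k + 1)).
    { rewrite Htk at 1. rewrite plus_INR, mult_INR. apply lt_INR in Hmod. nra. }
    assert (A1 : (6 / g + 6) * INR n * L < 3 * INR n * (INR k + 1)).
    { pose proof (pos_INR k). assert (INR T * (INR k + 1) <= 3 * INR n * (INR k + 1)) by (apply Rmult_le_compat_r; lra). lra. }
    assert (A2 : (6 / g + 6) * L < 3 * (INR k + 1)) by nra.
    assert (A3 : 2 * L / g + 2 * L < INR k + 1).
    { replace (2 * L / g + 2 * L) with ((6 / g + 6) * L / 3) by (field; lra). lra. }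
    lra. }
  assert (Hbound : forall x, List.In x (states n) -> Dx n U pi x t <= eps).
  { intros x Hx. rewrite Htk.
    eapply Rle_trans; [apply (D_iter n U pi Hn HU Hst x T beta k (t mod T) Hx Hb ltac:(lra) Hlow)|].
    rewrite Erho.
    assert (D1 : Dx n U pi x (t mod T) <= 2) by (eapply Rle_trans; [apply D_mono|apply D0_le]; auto).
    assert (Dn : 0 <= Dx n U pi x (t mod T)) by (unfold Dx; apply rsum_nonneg; intros; apply Rabs_pos).
    assert (R1 : (1 - g) ^ k <= exp (- g) ^ k) by (apply pow_incr; split; [lra|]; pose proof (exp_ineq1_le (- g)); lra).
    rewrite exp_pow in R1.
    assert (R2 : exp (INR k * - g) <= exp (- (2 * L))) by (apply exp_le; apply (Rmult_le_compat_r g) in Hk; [|lra]; unfold Rdiv in Hk; rewrite Rmult_assoc, Rinv_l, Rmult_1_r in Hk; lra).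
    assert (R3 : exp (- (2 * L)) = eps * eps).
    { replace (- (2 * L)) with (- L + - L) by ring. rewrite exp_plus, exp_Ropp. unfold L. rewrite exp_ln by (apply Rdiv_lt_0_compat; lra). field. lra. }
    assert (0 <= (1 - g) ^ k) by (apply pow_le; lra).
    assert ((1 - g) ^ k * Dx n U pi x (t mod T) <= (eps * eps) * 2) by (apply Rmult_le_compat; lra).
    nra. }
  unfold vdist. apply fold_Rmax_le; [lra|]. intros x Hx. apply Hbound; auto.
Qed.
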